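(* Let $\mathcal{C}_0\subseteq\mathbb{F}_2^n$ be a code with $|\mathcal{C}_0|\ge 2$ and minimum distance $d$, let $t=\lfloor (d-1)/2\rfloor$, and let $\varepsilon>0$. Let $\rho$ be a pmf on $\mathbb{F}_2^n$ such that $d_{TV}(P_{\mathcal{C}_0}\ast\rho,P_{U_n})\le\varepsilon$. Then $$\sum_{x:|x|\le t}\rho(x)\le\frac{|\mathcal{C}_0|V_n(t)}{2^n}+\varepsilon\qquad\text{and}\qquad\sum_{x:|x|\ge n-t}\rho(x)\le\frac{|\mathcal{C}_0|V_n(t)}{2^n}+\varepsilon.$$
   Context: $|x|$ is the Hamming weight of $x\in\mathbb{F}_2^n$. $P_{\mathcal{C}_0}$ is the uniform pmf on $\mathcal{C}_0$, $P_{U_n}$ the uniform pmf on $\mathbb{F}_2^n$. Convolution: $(f\ast g)(x)=\sum_{y\in\mathbb{F}_2^n}f(y)g(x-y)$. $V_n(t)=\sum_{j=0}^t\binom nj$ is the size of a Hamming ball of radius $t$. The total variation distance is $d_{TV}(P,Q)=\max_{A}|P(A)-Q(A)|=\frac12\sum_x|P(x)-Q(x)|$. *)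

(* Defs.v *)
From mathcomp Require Import all_boot all_order all_algebra.
Set Implicit Arguments. Unset Strict Implicit. Unset Printing Implicit Defensive.
Import Order.TTheory GRing.Theory Num.Theory.
Local Open Scope ring_scope.

Definition hw (n : nat) (x : 'rV['F_2]_n) : nat := #|[set i : 'I_n | x 0 i != 0]|.

Definition hdist (n : nat) (x y : 'rV['F_2]_n) : nat := hw (x - y).

Definition min_distance (n : nat) (C : {set 'rV['F_2]_n}) (d : nat) : Prop :=
  (exists x y, [/\ x \in C, y \in C, x != y & hdist x y = d]) /\
  (forall x y, x \in C -> y \in C -> x != y -> (d <= hdist x y)%N).

Definition is_pmf (R : numDomainType) (n : nat) (p : 'rV['F_2]_n -> R) : Prop :=
  (forall x, 0 <= p x) /\ \sum_x p x = 1.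

Definition unif_on (R : numFieldType) (n : nat) (C : {set 'rV['F_2]_n})
  (x : 'rV['F_2]_n) : R := if x \in C then (#|C|%:R)^-1 else 0.

Definition unif (R : numFieldType) (n : nat) (x : 'rV['F_2]_n) : R :=
  (2 ^ n)%:R^-1.

Definition conv (R : numDomainType) (n : nat) (f g : 'rV['F_2]_n -> R)
  (x : 'rV['F_2]_n) : R := \sum_y f y * g (x - y).

Definition dTV (R : numFieldType) (n : nat) (P Q : 'rV['F_2]_n -> R) : R :=
  2^-1 * \sum_x `|P x - Q x|.

Definition Vball (n t : nat) : nat := \sum_(0 <= j < t.+1) 'C(n, j).

(* Main.v *)
Require Import Defs.
From mathcomp Require Import all_boot all_order all_algebra.
From mathcomp Require Import lra zify.
Import Order.TTheory GRing.Theory Num.Theory.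
Local Open Scope ring_scope.

Section S.
Variable R : realFieldType.
Variable n : nat.
Local Notation V := 'rV['F_2]_n.

Lemma sub_sum_le (A B : {set V}) (F : V -> R) :
  (forall x, 0 <= F x) -> B \subset A ->
  \sum_(x in B) F x <= \sum_(x in A) F x.
Proof.
move=> F0 sBA; rewrite [X in _ <= X](big_setID B) /= (setIidPr sBA) lerDl.
by apply: sumr_ge0.
Qed.

Lemma card_V : #|{: V}| = (2 ^ n)%N.
Proof. by rewrite card_mx (card_Fp (erefl : prime 2)) mul1n. Qed.

Lemma sum_conv (C : {set V}) (rho : V -> R) :
  C != set0 -> is_pmf rho -> \sum_x conv (unif_on R C) rho x = 1.
Proof.
move=> CP [_ rho1]; rewrite /conv exchange_big /=. under eq_bigr do rewrite -mulr_sumr.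
have -> : \sum_j unif_on R C j * (\sum_i rho (i - j)) = \sum_j unif_on R C j.
  apply: eq_bigr => j _.
  rewrite (reindex (fun x => x + j)) /=; last first.
    by exists (fun x => x - j) => x _; rewrite ?addrK ?subrK.
  under eq_bigr do rewrite addrK.
  by rewrite rho1 mulr1.
rewrite /unif_on -big_mkcond /= sumr_const.
have c0 : (#|C| != 0)%N by rewrite cards_eq0.
by rewrite -[_ *+ _]mulr_natr mulVf // pnatr_eq0.
Qed.

Lemma sum_unif : \sum_x unif R (n:=n) x = 1.
Proof.
rewrite /unif sumr_const card_V -[_ *+ _]mulr_natr mulVf //.
by rewrite pnatr_eq0 expn_eq0.
Qed.

Lemma tv_bound (P Q : V -> R) (A : {set V}) :
  \sum_x P x = 1 -> \sum_x Q x = 1 ->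
  \sum_(x in A) P x - \sum_(x in A) Q x <= dTV P Q.
Proof.
move=> P1 Q1.
have e1 : \sum_(x in A) P x - \sum_(x in A) Q x = \sum_(x in A) (P x - Q x).
  by rewrite sumrB.
have e0 : \sum_x (P x - Q x) = 0 by rewrite sumrB P1 Q1 subrr.
rewrite (bigID (fun x => x \in A)) /= in e0.
have h1 : \sum_(x in A) (P x - Q x) <= \sum_(x in A) `|P x - Q x|.
  by apply: ler_sum => x _; apply: ler_norm.
have h2 : - \sum_(x | x \notin A) (P x - Q x) <= \sum_(x | x \notin A) `|P x - Q x|.
  rewrite -sumrN; apply: ler_sum => x _; rewrite -normrN; apply: ler_norm.
have tot := bigID (fun x => x \in A) predT (fun x => `|P x - Q x|).
rewrite e1 /dTV tot /=; lra.
Qed.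
Lemma sum_unif_on (C : {set V}) : C != set0 -> \sum_x unif_on R C x = 1.
Proof.
move=> CP; rewrite /unif_on -big_mkcond /= sumr_const.
have c0 : (#|C| != 0)%N by rewrite cards_eq0.
by rewrite -[_ *+ _]mulr_natr mulVf // pnatr_eq0.
Qed.

Lemma key (C S : {set V}) (rho : V -> R) (eps : R) :
  C != set0 -> is_pmf rho ->
  dTV (conv (unif_on R C) rho) (unif R (n:=n)) <= eps ->
  \sum_(x in S) rho x <= (#|C| * #|S|)%:R / (2 ^ n)%:R + eps.
Proof.
move=> CP rp tv; have [rho0 _] := rp.
set A := [set p.1 + p.2 | p in setX C S].
have hP : \sum_(x in S) rho x <= \sum_(x in A) conv (unif_on R C) rho x.
  rewrite /conv exchange_big /=.
  under [X in _ <= X]eq_bigr do rewrite -mulr_sumr.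
  apply: (@le_trans _ _ (\sum_y unif_on R C y * \sum_(x in S) rho x)).
    by rewrite -mulr_suml sum_unif_on // mul1r.
  apply: ler_sum => y _; rewrite /unif_on; case: ifP => yC; last by rewrite !mul0r.
  apply: ler_wpM2l; first by rewrite invr_ge0 ler0n.
  have -> : \sum_(x in S) rho x = \sum_(x in [set y + s | s in S]) rho (x - y).
    rewrite big_imset /=; last by move=> a b _ _; apply: addrI.
    by apply: eq_bigr => s _; rewrite addrC addKr.
  apply: sub_sum_le => //; apply/subsetP => x /imsetP [s sS ->].
  by apply/imsetP; exists (y, s) => //; rewrite inE yC sS.
have hQ : \sum_(x in A) unif R (n:=n) x <= (#|C| * #|S|)%:R / (2 ^ n)%:R.
  rewrite /unif sumr_const -[_ *+ _]mulr_natr mulrC.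
  apply: ler_wpM2r; first by rewrite invr_ge0 ler0n.
  rewrite ler_nat -cardsX; exact: leq_imset_card.
have := @tv_bound (conv (unif_on R C) rho) (unif R (n:=n)) A (@sum_conv C rho CP rp) sum_unif.
lra.
Qed.
Definition supp (x : V) : {set 'I_n} := [set i | x 0 i != 0].

Lemma F2_eq (a b : 'F_2) : (a != 0) = (b != 0) -> a = b.
Proof.
by case: a => [[|[|?]] ?]; case: b => [[|[|?]] ?] //= _; apply/val_inj.
Qed.

Lemma supp_inj : injective supp.
Proof.
move=> x y /setP e; apply/rowP => j.
by apply: F2_eq; have := e j; rewrite !inE.
Qed.
End S.

Local Open Scope nat_scope.
Lemma card_small (m t : nat) :
  (#|[set A : {set 'I_m} | (#|A| <= t)%N]| <= Vball m t)%N.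
Proof.
elim: t => [|t IH].
  rewrite /Vball big_nat1; have := card_draws 'I_m 0; rewrite card_ord => <-.
  by apply: subset_leq_card; apply/subsetP => A; rewrite !inE leqn0.
have -> : [set A : {set 'I_m} | #|A| <= t.+1] =
   [set A : {set 'I_m} | #|A| <= t] :|: [set A : {set 'I_m} | #|A| == t.+1].
  by apply/setP => A; rewrite !inE leq_eqVlt orbC ltnS.
rewrite /Vball big_nat_recr //= -/(Vball m t).
rewrite cardsU; apply: leq_trans (leq_subr _ _) _.
by rewrite card_draws card_ord leq_add2r.
Qed.

Lemma card_ball1 m t : #|[set x : 'rV['F_2]_m | hw x <= t]| <= Vball m t.
Proof.
apply: leq_trans (card_small m t).
rewrite -(card_imset _ (@supp_inj m)); apply: subset_leq_card.
by apply/subsetP => A /imsetP [x]; rewrite inE => hx ->; rewrite inE.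
Qed.

Lemma card_ball2 m t : #|[set x : 'rV['F_2]_m | m - t <= hw x]| <= Vball m t.
Proof.
apply: leq_trans (card_small m t).
have inj : injective (fun x : 'rV['F_2]_m => ~: supp m x).
  by move=> x y /setC_inj /supp_inj.
rewrite -(card_imset _ inj); apply: subset_leq_card.
apply/subsetP => A /imsetP [x]; rewrite inE => hx ->; rewrite inE.
have := cardsC (supp m x); rewrite card_ord.
have -> : #|supp m x| = hw x by [].
move: hx; clear; set h := hw x; set c := #|~: _|; lia.
Qed.
Local Close Scope nat_scope.

Lemma final_step (R : realFieldType) m (C S : {set 'rV['F_2]_m}) (rho : 'rV['F_2]_m -> R) eps v :
  C != set0 -> is_pmf rho ->
  dTV (conv (unif_on R C) rho) (unif R (n:=m)) <= eps ->
  (#|S| <= v)%N ->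
  \sum_(x in S) rho x <= (#|C| * v)%:R / (2 ^ m)%:R + eps.
Proof.
move=> CP rp tv hS; apply: le_trans (@key R m C S rho eps CP rp tv) _.
rewrite lerD2r; apply: ler_wpM2r; first by rewrite invr_ge0 ler0n.
by rewrite ler_nat leq_mul2l hS orbT.
Qed.

Theorem mainTheorem2 (R : realFieldType) (n : nat) (C0 : {set 'rV['F_2]_n})
  (d : nat) (eps : R) (rho : 'rV['F_2]_n -> R) :
  (2 <= #|C0|)%N ->
  min_distance C0 d ->
  0 < eps ->
  is_pmf rho ->
  dTV (conv (unif_on R C0) rho) (unif R (n:=n)) <= eps ->
  let t := ((d - 1) %/ 2)%N in
  (\sum_(x | (hw x <= t)%N) rho x
     <= (#|C0| * Vball n t)%:R / (2 ^ n)%:R + eps) /\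
  (\sum_(x | (n - t <= hw x)%N) rho x
     <= (#|C0| * Vball n t)%:R / (2 ^ n)%:R + eps).
Proof.
move=> hC _ _ rp tv t.
have CP : C0 != set0 by rewrite -card_gt0; apply: leq_trans hC.
split.
  have := @final_step R n C0 [set x | (hw x <= t)%N] rho eps _ CP rp tv (card_ball1 n t).
  by under eq_bigl do rewrite inE.
have := @final_step R n C0 [set x | (n - t <= hw x)%N] rho eps _ CP rp tv (card_ball2 n t).
by under eq_bigl do rewrite inE.
Qed.
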